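(* Let $\sigma=(M_1,M_2)$ be a schedule with machine 1 critical, and $k\ge1$. Suppose there exist sets $S'\subseteq M_1$ and $S''\subseteq M_2$ with $|S'|+|S''|=k$ and $0<\sum_{j\in S'}p_j-\sum_{j\in S''}p_j<\Delta$. If the randomized $k$-swap algorithm is repeated (with independent randomness) $\gamma=\dfrac{2^k}{\binom{k}{\lceil k/2\rceil}}$ times, the probability that it fails to find an improving schedule is at most $\frac1e$.
   Context: Problem $P2\|C_{\max}$: $n$ jobs with processing times $p_j>0$, two identical machines. A schedule $\sigma=(M_1,M_2)$ partitions the jobs into sets processed on machines 1 and 2; loads $L_i=\sum_{j\in M_i}p_j$, makespan $L_{\max}=\max_iL_i$, $L_{\min}=\min_iL_i$, $\Delta=L_{\max}-L_{\min}$; a machine with load $L_{\max}$ is critical. An improving schedule is one with strictly smaller makespan. Randomized $k$-swap algorithm (input $\sigma$, $k$; machine 1 critical): (1) assign each job independently and uniformly at random to $A$ or $B$; (2) for every $S_1\subseteq A$ with $|S_1|=\lceil k/2\rceil$ put $\sum_{j\in S_1\cap M_1}p_j-\sum_{j\in S_1\cap M_2}p_j$ (with reference to $S_1$) into $A_\Sigma$; (3) for every $S_2\subseteq B$ with $|S_2|=\lfloor k/2\rfloor$ put $\sum_{j\in S_2\cap M_1}p_j-\sum_{j\in S_2\cap M_2}p_j$ into $B_\Sigma$; (4) sort $B_\Sigma$ non-decreasingly; (5) for each $x\in A_\Sigma$ binary-search for $y\in B_\Sigma$ with $-x<y<\Delta-x$; if found, interchange the machine assignments of all jobs of the corresponding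 $S_1\cup S_2$ and return True (the algorithm succeeds); (6) otherwise return False (the algorithm fails). *)

(* Defs.v *)
From HB Require Import structures.
From mathcomp Require Import all_boot all_order all_algebra.
From mathcomp Require Import reals sequences.
Set Implicit Arguments. Unset Strict Implicit. Unset Printing Implicit Defensive.
Import Order.TTheory GRing.Theory Num.Theory.
Local Open Scope ring_scope.

(* Jobs are 'I_n, processing times p : 'I_n -> R.  A schedule is given by the
   set M1 of jobs on machine 1; machine 2 gets the complement ~: M1. *)
Section Sched.
Variables (R : realType) (n : nat) (p : 'I_n -> R) (M1 : {set 'I_n}).

Definition load (M : {set 'I_n}) : R := \sum_(j in M) p j.

(* Delta = L_max - L_min; used when machine 1 is critical, i.e. L_max = L_1. *)
Definition Delta : R := load M1 - load (~: M1).

Definition swap_val (S : {set 'I_n}) : R :=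
  load (S :&: M1) - load (S :&: ~: M1).

(* One run of the randomized k-swap algorithm, given the random assignment
   a : job -> bool (a j = true means j in A, false means j in B).
   The run returns True iff some x in A_Sigma and y in B_Sigma satisfy
   -x < y < Delta - x (which is exactly what steps (4)-(5) search for). *)
Definition kswap_succeeds (k : nat) (a : {ffun 'I_n -> bool}) : bool :=
  [exists S1 : {set 'I_n}, exists S2 : {set 'I_n},
     [&& S1 \subset [set j | a j], S2 \subset [set j | ~~ a j],
         #|S1| == uphalf k, #|S2| == k./2,
         - swap_val S1 < swap_val S2 & swap_val S2 < Delta - swap_val S1]].

End Sched.

(* number of repetitions: gamma = 2^k / C(k, ceil(k/2)), rounded up to an
   integer number of runs. *)
Definition ceil_divn (a b : nat) : nat := (a + b.-1) %/ b.
Definition gamma_runs (k : nat) : nat := ceil_divn (2 ^ k) 'C(k, uphalf k).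

(* Probability that all m independent runs fail: the random bits of the
   m runs form a uniformly distributed w : 'I_m -> ('I_n -> bool). *)
Definition fail_prob (R : realType) (n : nat) (p : 'I_n -> R) (M1 : {set 'I_n})
  (k m : nat) : R :=
  #|[set w : {ffun 'I_m -> {ffun 'I_n -> bool}} |
      [forall i, ~~ kswap_succeeds p M1 k (w i)]]|%:R /
  #|{: {ffun 'I_m -> {ffun 'I_n -> bool}}}|%:R.

(* Main.v *)
Require Import Defs.
From HB Require Import structures.
From mathcomp Require Import all_boot all_order all_algebra.
From mathcomp Require Import reals sequences exp zify lra ring.
Import Order.TTheory GRing.Theory Num.Theory.
Lemma card_E n (S X : {set 'I_n}) : X \subset S ->
  #|[set a : {ffun 'I_n -> bool} | S :&: [set j | a j] == X]| = 2 ^ (n - #|S|).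
Proof.
move=> XS.
pose F := fun j : 'I_n => if j \in S then pred1 (j \in X) else predT.
have -> : #|[set a : {ffun 'I_n -> bool} | S :&: [set j | a j] == X]| = #|family F|.
  apply: eq_card => a; rewrite inE; apply/idP/familyP.
  - move=> /eqP eqX j; rewrite /F -eqX; case: ifP => //= jS; by rewrite !inE jS.
  - move=> H; apply/eqP/setP => j; rewrite !inE; have := H j; rewrite /F.
    case: ifP => jS /=; first by move/eqP.
    by case: (boolP (j \in X)) => // /(subsetP XS); rewrite jS.
rewrite card_family foldrE big_map big_enum /=.
rewrite (bigID (mem S)) /=.
rewrite big1; last by move=> j jS; rewrite /F jS card1.
rewrite mul1n (eq_bigr (fun _ => 2)); last first.
  by move=> j /negbTE jS; rewrite /F jS card_bool.
rewrite prod_nat_const.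
congr (_ ^ _).
have h := cardsC S; rewrite card_ord in h.
have -> : n - #|S| = #|~: S| by lia.
by apply: eq_card => j; rewrite !inE.
Qed.


Lemma count_good n (S : {set 'I_n}) (h : nat) :
 #|[set a : {ffun 'I_n -> bool} | #|S :&: [set j | a j]| == h]| = 'C(#|S|, h) * 2 ^ (n - #|S|).
Proof.
rewrite -sum1_card.
rewrite (partition_big (fun a : {ffun 'I_n -> bool} => S :&: [set j | a j])
   (fun X => X \in [set X : {set 'I_n} | X \subset S & #|X| == h])) /=; last first.
  by move=> a; rewrite !inE subsetIl.
rewrite -cards_draws -sum_nat_const.
apply: eq_bigr => X; rewrite inE => /andP [XS hX].
rewrite -(@card_E _ _ _ XS) -sum1_card; apply: eq_bigl => a.
rewrite !inE; case: (@eqP _ (S :&: [set j | a j]) X) => [->|]; by rewrite ?hX ?andbF.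
Qed.


Local Open Scope ring_scope.


Lemma good_succ (R : realType) (n : nat) (p : 'I_n -> R) (M1 : {set 'I_n}) (k : nat)
  (S' S'' : {set 'I_n}) (a : {ffun 'I_n -> bool}) :
  S' \subset M1 -> S'' \subset ~: M1 -> (#|S'| + #|S''| = k)%N ->
  0 < load p S' - load p S'' -> load p S' - load p S'' < Delta p M1 ->
  #|(S' :|: S'') :&: [set j | a j]| == uphalf k ->
  kswap_succeeds p M1 k a.
Proof.
move=> s1 s2 ck c1 c2 hA.
set S := S' :|: S''.
set A := [set j | a j].
have disj : S' :&: S'' = set0.
  apply/setP => j; rewrite !inE; apply/negbTE/negP => /andP [h1 h2].
  by move: (subsetP s1 j h1) (subsetP s2 j h2); rewrite inE => ->.
have cS : #|S| = k by rewrite /S cardsU disj cards0 subn0.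
have cS2 : #|S :\: A| = k./2.
  have hc := cardsID A S; rewrite cS (eqP hA) in hc.
  apply: (@addnI (uphalf k)); rewrite hc uphalf_half -addnA addnn odd_double_half //.
have e1 : (S :&: A) :&: M1 = S' :&: A.
  apply/setP => j; move: (subsetP s1 j) (subsetP s2 j); rewrite !inE.
  by case: (j \in S'); case: (j \in S''); case: (j \in M1); case: (a j) => h1 h2 //=; solve [ by move: (h1 isT) | by move: (h2 isT) ].
have e2 : (S :\: A) :&: M1 = S' :\: A.
  apply/setP => j; move: (subsetP s1 j) (subsetP s2 j); rewrite !inE.
  by case: (j \in S'); case: (j \in S''); case: (j \in M1); case: (a j) => h1 h2 //=; solve [ by move: (h1 isT) | by move: (h2 isT) ].
have e3 : (S :&: A) :&: ~: M1 = S'' :&: A.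
  apply/setP => j; move: (subsetP s1 j) (subsetP s2 j); rewrite !inE.
  by case: (j \in S'); case: (j \in S''); case: (j \in M1); case: (a j) => h1 h2 //=; solve [ by move: (h1 isT) | by move: (h2 isT) ].
have e4 : (S :\: A) :&: ~: M1 = S'' :\: A.
  apply/setP => j; move: (subsetP s1 j) (subsetP s2 j); rewrite !inE.
  by case: (j \in S'); case: (j \in S''); case: (j \in M1); case: (a j) => h1 h2 //=; solve [ by move: (h1 isT) | by move: (h2 isT) ].
have l1 : load p S' = load p (S' :&: A) + load p (S' :\: A) by rewrite /load (big_setID A).
have l2 : load p S'' = load p (S'' :&: A) + load p (S'' :\: A) by rewrite /load (big_setID A).
apply/existsP; exists (S :&: A); apply/existsP; exists (S :\: A).
rewrite subsetIr hA cS2 eqxx /=.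
apply/andP; split.
  by apply/subsetP => j; rewrite !inE => /andP [].
rewrite /swap_val e1 e2 e3 e4.
apply/andP; split; lra.
Qed.

Lemma real_part (R: realType) (F N C K D m : nat) : (0<K)%N -> (0 < D)%N -> N = (D*K)%N ->
  (F + C*D <= N)%N -> (K <= m*C)%N -> (F^m)%:R / (N^m)%:R <= (expR (1:R))^-1.
Proof.
move=> K0 D0 eN hF hm.
have K0' : (0:R) < K%:R by rewrite ltr0n.
have D0' : (0:R) < D%:R by rewrite ltr0n.
have N0' : (0:R) < N%:R by rewrite eN natrM mulr_gt0.
have hF' : (F%:R : R) <= N%:R - C%:R * D%:R.
  by rewrite lerBrDr -natrM -natrD ler_nat.
have hm' : (K%:R : R) <= m%:R * C%:R by rewrite -natrM ler_nat.
have q1 : (F%:R / N%:R : R) <= 1 - C%:R / K%:R.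
  have -> : (1 - C%:R / K%:R : R) = (N%:R - C%:R * D%:R) / N%:R.
    rewrite eN natrM; field; apply/andP; split; rewrite gt_eqF //.
  by rewrite ler_pM2r // invr_gt0.
have q2 : (1 - C%:R / K%:R : R) <= expR (- (C%:R / K%:R)) by apply: expR_ge1Dx.
rewrite !natrX -expr_div_n.
apply: (le_trans (y := expR (- (C%:R / K%:R)) ^+ m)).
  apply: lerXn2r; rewrite ?nnegrE ?divr_ge0 ?ler0n ?expR_ge0 //.
  exact: le_trans q1 q2.
rewrite -expRM_natl -expRN ler_expR.
rewrite mulrN lerN2 mulrA ler_pdivlMr // mul1r //.
Qed.

Theorem lemma1 (R : realType) (n : nat) (p : 'I_n -> R) (M1 : {set 'I_n}) (k : nat)
  (hp : forall j, 0 < p j)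
  (hcrit : load p (~: M1) <= load p M1)
  (hk : (1 <= k)%N)
  (hS : exists S' S'' : {set 'I_n},
      [/\ S' \subset M1, S'' \subset ~: M1, (#|S'| + #|S''| = k)%N,
          0 < load p S' - load p S'' & load p S' - load p S'' < Delta p M1]) :
  fail_prob p M1 k (gamma_runs k) <= (expR (1 : R))^-1.
Proof.
case: hS => S' [S'' [s1 s2 ck c1 c2]].
set S := S' :|: S''.
have disj : S' :&: S'' = set0.
  apply/setP => j; rewrite !inE; apply/negbTE/negP => /andP [h1 h2].
  by move: (subsetP s1 j h1) (subsetP s2 j h2); rewrite inE => ->.
have cS : #|S| = k by rewrite /S cardsU disj cards0 subn0.
have kn : (k <= n)%N by rewrite -cS -[X in (_ <= X)%N]card_ord max_card.
set Fs := [set a : {ffun 'I_n -> bool} | ~~ kswap_succeeds p M1 k a].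
set Good := [set a : {ffun 'I_n -> bool} | #|S :&: [set j | a j]| == uphalf k].
have cG : #|Good| = ('C(k, uphalf k) * 2 ^ (n - k))%N by rewrite count_good cS.
have GF : Good \subset ~: Fs.
  apply/subsetP => a; rewrite !inE negbK => hA.
  exact: (@good_succ _ _ _ _ _ S' S'' a s1 s2 ck c1 c2 hA).
have hF : (#|Fs| + 'C(k, uphalf k) * 2 ^ (n - k) <= 2 ^ n)%N.
  rewrite -cG; apply: (leq_trans (leq_add (leqnn _) (subset_leq_card GF))).
  by rewrite cardsC card_ffun card_bool card_ord.
rewrite /fail_prob.
have -> : #|[set w : {ffun 'I_(gamma_runs k) -> {ffun 'I_n -> bool}} |
      [forall i, ~~ kswap_succeeds p M1 k (w i)]]| = (#|Fs| ^ gamma_runs k)%N.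
  rewrite -[in RHS](card_ord (gamma_runs k)) -card_ffun_on; apply: eq_card => w.
  rewrite inE; apply/forallP/ffun_onP => H i; have := H i; by rewrite inE.
rewrite card_ffun card_ffun card_bool card_ord card_ord.
apply: (@real_part _ _ _ ('C(k, uphalf k)) (2 ^ k) (2 ^ (n - k))).
- by rewrite expn_gt0.
- by rewrite expn_gt0.
- by rewrite -expnD subnK.
- exact: hF.
- rewrite /gamma_runs /ceil_divn.
  have C0 : (0 < 'C(k, uphalf k))%N by rewrite bin_gt0 leq_uphalf_double -addnn leq_addr.
  move: C0; set C := 'C(k, uphalf k); set a := (2 ^ k)%N => C0.
  have h1 := div.divn_eq (a + C.-1)%N C; have h2 := div.ltn_pmod (a + C.-1)%N C0.
  rewrite mulnC; move: h1 h2; move: ((a + C.-1) %/ C)%N ((a + C.-1) %% C)%N => q r; lia.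
Qed.
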